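(* Let $m\ge n$, let $D$ be an $m\times n$ real matrix of rank $n$, and let $S$ be a compact subset of $\mathbb{R}^n_{>0}$. Then there exists a function $\alpha$ of class $\mathcal{K}_\infty$ such that $|D(\rho(x)-\rho(a))|^2\ge\alpha(|x-a|)$ for all $a\in S$ and all $x\in\mathbb{R}^n_{>0}$, where $\rho(x)=(\ln x_1,\dots,\ln x_n)'$.
   Context: $|\cdot|$ is the Euclidean norm; $\mathcal{K}_\infty$ is the class of continuous strictly increasing unbounded functions $[0,\infty)\to[0,\infty)$ vanishing at $0$. *)

(* Defs.v *)
From HB Require Import structures.
From mathcomp Require Import all_boot all_order all_algebra.
From mathcomp Require Import boolp classical_sets reals topology normedtype exp.
Set Implicit Arguments. Unset Strict Implicit. Unset Printing Implicit Defensive.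
Import Order.TTheory GRing.Theory Num.Theory.
Import numFieldNormedType.Exports.
Local Open Scope classical_set_scope.
Local Open Scope ring_scope.

Definition eucl_norm (R : realType) (k : nat) (x : 'cV[R]_k) : R :=
  Num.sqrt (\sum_(i < k) (x i 0) ^+ 2).

Definition pos_orthant (R : realType) (k : nat) : set 'cV[R]_k :=
  [set x | forall i : 'I_k, 0 < x i 0].

Definition rho (R : realType) (k : nat) (x : 'cV[R]_k) : 'cV[R]_k :=
  \col_i ln (x i 0).

(* class K_infty: continuous, strictly increasing, unbounded functions
   [0,oo) -> [0,oo) vanishing at 0 (only values on [0,oo) matter). *)
Definition K_infty (R : realType) (alpha : R -> R) : Prop :=
  [/\ {within `[0, +oo[%classic, continuous alpha},
      alpha 0 = 0,
      (forall r, 0 <= r -> 0 <= alpha r),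
      (forall r s, 0 <= r -> r < s -> alpha r < alpha s)
    & (forall M : R, exists r, 0 <= r /\ M < alpha r)].

(* Main.v *)
Require Import Defs.
From HB Require Import structures.
From mathcomp Require Import all_boot all_order all_algebra.
From mathcomp Require Import boolp classical_sets reals topology normedtype exp.
Import Order.TTheory GRing.Theory Num.Theory.
Import numFieldNormedType.Exports.
Local Open Scope classical_set_scope.
Local Open Scope ring_scope.
Lemma compact_entry_ub (R : realType) n (S : set 'cV[R]_n) : compact S ->
  exists hi : R, 0 < hi /\ forall a, S a -> forall i, a i 0 <= hi.
Proof.
move=> /compact_bounded [M [Mreal H]].
exists (`|M| + 1); split; first by rewrite ltr_pwDr // normr_ge0.
move=> a Sa i.
have HM : M < `|M| + 1 by apply: le_lt_trans (real_ler_norm Mreal) _; rewrite ltrDl.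
have Ha := H _ HM a Sa.
apply: le_trans (ler_norm _) _; apply: le_trans Ha.
have /mapP[j Hj ->] : `|a i 0| \in [seq `|a x.1 x.2| | x : 'I_n * 'I_1].
  by apply/mapP; exists (i, 0) => //=; rewrite mem_enum.
by rewrite [leRHS]/Num.norm /= mx_normrE; apply/bigmax_geP; right => /=; exists j.
Qed.
From mathcomp Require Import ring lra sequences.
Lemma ln_abs_ge (R : realType) (t : R) : 0 < t -> ln (1 + `|t - 1|) <= `|ln t|.
Proof.
move=> t0; case: (leP 1 t) => t1.
  rewrite ger0_norm ?subr_ge0 // addrC subrK ger0_norm //; exact: ln_ge0.
rewrite ltr0_norm ?subr_lt0 // ltr0_norm; last by apply: ln_lt0; rewrite t0.
rewrite -lnV ?posrE // ler_ln ?posrE ?invr_gt0 //; last lra.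
rewrite -subr_ge0.
have -> : t^-1 - (1 + - (t - 1)) = (t - 1) ^+ 2 / t by field; rewrite gt_eqF.
by rewrite divr_ge0 ?sqr_ge0 // ltW.
Qed.

Lemma entry_le_eucl (R : realType) k (w : 'cV[R]_k) j : `|w j 0| <= eucl_norm w.
Proof.
rewrite /eucl_norm -sqrtr_sqr ler_wsqrtr // (bigD1 j) //= lerDl.
by rewrite sumr_ge0 // => i _; rewrite sqr_ge0.
Qed.
Lemma D_lower (R : realType) m n (D : 'M[R]_(m, n)) : \rank D = n ->
  exists K : R, 0 < K /\ forall (v : 'cV[R]_n) i,
    (v i 0) ^+ 2 <= K * (eucl_norm (D *m v)) ^+ 2.
Proof.
move=> HD; have /row_fullP [L HL] : row_full D by rewrite /row_full HD.
pose C := \sum_i \sum_j `|L i j|.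
exists (C ^+ 2 + 1); split; first by rewrite ltr_pwDr // sqr_ge0.
move=> v i.
have -> : v i 0 = (L *m (D *m v)) i 0 by rewrite mulmxA HL mul1mx.
set w := D *m v.
have N0 : 0 <= eucl_norm w by rewrite /eucl_norm sqrtr_ge0.
have C0 : 0 <= C by rewrite sumr_ge0 // => ? _; rewrite sumr_ge0.
have Hb : `|(L *m w) i 0| <= C * eucl_norm w.
  rewrite mxE; apply: le_trans (ler_norm_sum _ _ _) _.
  apply: (@le_trans _ _ (\sum_j `|L i j| * eucl_norm w)).
    apply: ler_sum => j _; rewrite normrM ler_wpM2l //; exact: entry_le_eucl.
  rewrite -mulr_suml ler_wpM2r // /C (bigD1 i) //= lerDl.
  by rewrite sumr_ge0 // => ? _; rewrite sumr_ge0.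
have Ha : 0 <= `|(L *m w) i 0| by [].
rewrite -real_normK ?num_real //.
move: Ha Hb; set a := `|_|; set N := eucl_norm w => Ha Hb.
have h1 : a ^+ 2 <= (C * N) ^+ 2 by rewrite !expr2; apply: ler_pM.
have h2 := sqr_ge0 N.
rewrite exprMn in h1. lra.
Qed.
Lemma eucl_le_max (R : realType) n (x : 'cV[R]_n) (i0 : 'I_n) :
  exists i, eucl_norm x <= n%:R * `|x i 0|.
Proof.
case: (@arg_maxP _ _ _ i0 xpredT (fun j => `|x j 0|)) => // i _ Hi.
exists i.
have n1 : (1 <= n)%N by case: n x i0 {i Hi} => [|n'] _ [].
have Hn : 1 <= (n%:R : R) by rewrite ler1n.
rewrite /eucl_norm -(ger0_norm (_ : 0 <= n%:R * `|x i 0|)); last by rewrite mulr_ge0.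
rewrite -sqrtr_sqr ler_wsqrtr //.
apply: (@le_trans _ _ (\sum_(j < n) `|x i 0| ^+ 2)).
  apply: ler_sum => j _; rewrite -real_normK ?num_real //.
  by rewrite ler_pXn2r ?nnegrE //; apply: Hi.
rewrite sumr_const card_ord -[leLHS]mulr_natl exprMn.
by rewrite ler_wpM2r ?sqr_ge0 // expr2 ler_peMl // ltW // (lt_le_trans ltr01).
Qed.
Theorem lemmaA2 (R : realType) (m n : nat) (D : 'M[R]_(m, n))
  (S : set 'cV[R]_n) :
  (n <= m)%N -> \rank D = n ->
  compact S -> S `<=` @pos_orthant R n ->
  exists alpha : R -> R, K_infty alpha /\
    forall a x, S a -> pos_orthant x ->
      alpha (eucl_norm (x - a)) <= (eucl_norm (D *m (rho x - rho a))) ^+ 2.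
Proof.
move=> _ HD cS Spos.
have [hi [hi0 Hhi]] := @compact_entry_ub R n S cS.
have [K [K0 HK]] := @D_lower R m n D HD.
pose B := hi * n.+1%:R.
have B0 : 0 < B by rewrite mulr_gt0.
pose alpha := fun r : R => ln (1 + r / B) ^+ 2 / K.
have alpha0 : alpha 0 = 0 by rewrite /alpha mul0r addr0 ln1 expr0n mul0r.
have lnpos : forall r, 0 <= r -> 0 <= ln (1 + r / B).
  by move=> r r0; apply: ln_ge0; rewrite lerDl divr_ge0 // ltW.
exists alpha; split.
  split => //.
  - apply: continuous_in_subspaceT => r; rewrite inE /= in_itv /= andbT => r0.
    have g0 : 0 < 1 + r / B by rewrite ltr_pwDl // divr_ge0 // ltW.
    have Hg : {for r, continuous (fun r : R => 1 + r / B)}.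
      by apply: cvgD; [exact: cvg_cst | apply: cvgMr_tmp; exact: cvg_id].
    have Hh := continuous_comp Hg (continuous_ln g0).
    have -> : alpha = (fun r => ((@ln R \o (fun r : R => 1 + r / B)) \* (@ln R \o (fun r : R => 1 + r / B))) r * K^-1).
      by apply/funext => s; rewrite /alpha /= expr2.
    by apply: cvgMr_tmp; apply: cvgM.
  - by move=> r r0; rewrite /alpha divr_ge0 ?sqr_ge0 // ltW.
  - move=> r s r0 rs; rewrite /alpha ltr_pM2r ?invr_gt0 //.
    have s0 : 0 <= s by apply: ltW; apply: le_lt_trans rs.
    rewrite ltr_pXn2r ?nnegrE ?lnpos //.
    rewrite ltr_ln; first by rewrite ltrD2l ltr_pM2r ?invr_gt0.
      by rewrite posrE ltr_pwDl // divr_ge0 // ltW.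
    by rewrite posrE ltr_pwDl // divr_ge0 // ltW.
  - move=> M; pose y := `|M| * K + 1.
    have y1 : 1 <= y by rewrite lerDr mulr_ge0 // ltW.
    have ey : 1 <= expR y.
      apply: le_trans _ (@expR_ge1Dx R y); rewrite lerDl; exact: le_trans ler01 y1.
    exists (B * (expR y - 1)); split; first by rewrite mulr_ge0 ?subr_ge0 // ltW.
    rewrite /alpha [B * _]mulrC mulfK ?gt_eqF // addrC subrK expRK.
    rewrite ltr_pdivlMr //.
    have hM : M * K <= `|M| * K by rewrite ler_wpM2r ?ler_norm // ltW.
    have yy : y <= y ^+ 2 by rewrite expr2 ler_peMl // (le_trans ler01).
    have hy : `|M| * K < y by rewrite /y ltrDl.
    by apply: le_lt_trans hM _; apply: lt_le_trans yy.
move=> a x Sa Px.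
have Pa := Spos a Sa.
case: (pickP (fun _ : 'I_n => true)) => [i0 _ | H0]; last first.
  have -> : eucl_norm (x - a) = 0.
    by rewrite /eucl_norm big1 ?sqrtr0 // => i; have := H0 i.
  by rewrite alpha0 sqr_ge0.
have [i Hi] := @eucl_le_max R n (x - a) i0.
set v := rho x - rho a.
have Hv := HK v i.
rewrite /alpha ler_pdivrMr // [_ * K]mulrC; apply: le_trans _ Hv.
have ai0 : 0 < a i 0 := Pa i.
have xi0 : 0 < x i 0 := Px i.
have -> : v i 0 = ln (x i 0 / a i 0) by rewrite !mxE ln_div ?posrE.
set r := eucl_norm (x - a).
have r0 : 0 <= r by rewrite /r /eucl_norm sqrtr_ge0.
set t := x i 0 / a i 0.
have t0 : 0 < t by rewrite divr_gt0.
rewrite -[X in _ <= X]real_normK ?num_real // ler_pXn2r ?nnegrE ?lnpos //.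
apply: le_trans _ (@ln_abs_ge R t t0).
rewrite ler_ln ?posrE ?ltr_pwDl ?divr_ge0 ?(ltW B0) // ?normr_ge0 // lerD2l.
have -> : t - 1 = (x i 0 - a i 0) / a i 0 by rewrite /t; field; rewrite gt_eqF.
rewrite normrM [`|(a i 0)^-1|]ger0_norm ?invr_ge0 ?(ltW ai0) //.
move: Hi; rewrite !mxE => Hi.
set u := `|x i 0 - a i 0| in Hi *.
have u0 : 0 <= u by apply: normr_ge0.
have ahi := Hhi a Sa i.
rewrite ler_pdivrMr //.
have q1 : 1 <= hi / a i 0 by rewrite ler_pdivlMr // mul1r.
have -> : u / a i 0 * B = u * (hi / a i 0) * n.+1%:R by rewrite /B; ring.
have uq : u <= u * (hi / a i 0) by rewrite ler_peMr.
have -> : (n.+1%:R : R) = n%:R + 1 by rewrite -natr1.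
have n0 : 0 <= (n%:R : R) by apply: ler0n.
move: uq Hi; set q := u * (hi / a i 0); set N := (n%:R : R) => uq Hi.
have Hr : r <= N * u by exact: Hi.
apply: le_trans Hr _; rewrite mulrDr mulr1 [q * N]mulrC.
apply: (@le_trans _ _ (N * q)); first by rewrite ler_wpM2l.
by rewrite lerDl; apply: le_trans uq.
Qed.
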